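(* Consider the DRV process with choice function $k(n)\to\infty$. Then $\mathbb{E}[D_0(\lfloor n/2\rfloor)] = O\!\left(\frac{n}{k(n)}\right)$, where $D_0(t)$ denotes the number of vertices of degree $0$ after $t$ edges have been added.
   Context: The DRV process (Degree Rule with Varying Choice): fix a function $k=k(n)$ with $2\le k(n)\le n$. Start at time $t=0$ with $n$ isolated vertices and no edges. At each time step $t=0,1,2,\dots$ (one edge is added per step, so after $t$ steps the graph has $t$ edges; multiple edges are allowed), independently of the past choose a set $V_t$ of $k(n)$ distinct vertices uniformly at random, and let $V_{t,d}$ be the set of vertices in $V_t$ whose current degree is $d$. If $|V_{t,0}|\ge 2$, add an edge between two vertices of $V_{t,0}$ sampled uniformly at random without replacement; otherwise, if $|V_{t,1}|\ge 2$, add an edge between two vertices of $V_{t,1}$ sampled uniformly at random without replacement; otherwise add an edge between two vertices of $V_t$ sampled uniformly at random without replacement. $D_i(t)$ is the number of vertices of degree $i$ after $t$ steps. *)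

(* Defs.v *)
From HB Require Import structures.
From mathcomp Require Import all_boot all_order all_algebra.
Set Implicit Arguments. Unset Strict Implicit. Unset Printing Implicit Defensive.
Import Order.TTheory GRing.Theory Num.Theory.
Local Open Scope ring_scope.

(* A state of the process: the degree of every vertex of 'I_n.  The evolution
   of the process (and D_0) depends only on the degree sequence. *)
Definition degseq (n : nat) := {ffun 'I_n -> nat}.

Definition empty_graph (n : nat) : degseq n := [ffun => 0%N].

Definition add_edge n (s : degseq n) (u v : 'I_n) : degseq n :=
  [ffun i => (s i + (i == u) + (i == v))%N].

Definition drv_choice_set n (s : degseq n) (V : {set 'I_n}) : {set 'I_n} :=
  let V0 := [set i in V | s i == 0%N] in
  let V1 := [set i in V | s i == 1%N] in
  if (1 < #|V0|)%N then V0 else if (1 < #|V1|)%N then V1 else V.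

(* drv_exp n k t f s = E[ f(state after t more steps) | current state s ],
   where a step: V uniform among k-subsets of 'I_n; then an ordered pair (u,v)
   of distinct elements of the chosen set S uniform (equivalently an unordered
   pair sampled without replacement); add edge uv. *)
Fixpoint drv_exp (n k t : nat) (f : degseq n -> rat) (s : degseq n) : rat :=
  match t with
  | O => f s
  | t'.+1 =>
      (\sum_(V : {set 'I_n} | #|V| == k)
         let S := drv_choice_set s V in
         (\sum_(u in S) \sum_(v in S | v != u) drv_exp k t' f (add_edge s u v))
           / (#|S| * (#|S| - 1))%:R)
      / ('C(n, k))%:R
  end.

Definition D0 n (s : degseq n) : rat := (#|[set i | s i == 0%N]|)%:R.

Definition ED0 (n k t : nat) : rat := drv_exp k t (@D0 n) (empty_graph n).

(* Main.v *)
Require Import Defs.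
From HB Require Import structures.
From mathcomp Require Import all_boot all_order all_algebra.
From mathcomp Require Import zify ring lra.
Import Order.TTheory GRing.Theory Num.Theory.
Set Implicit Arguments. Unset Strict Implicit. Unset Printing Implicit Defensive.
Lemma bad_count n k (Z : {set 'I_n}) :
  (#|[set V : {set 'I_n} | (#|V| == k) && ~~ (1 < #|V :&: Z|)]|
    <= 'C(#|~: Z|, k) + #|Z| * 'C(#|~: Z|, k.-1))%N.
Proof.
set F0 := [set A : {set 'I_n} | A \subset ~: Z & #|A| == k].
set F1 := [set A : {set 'I_n} | A \subset ~: Z & #|A| == k.-1].
set F := [set V : {set 'I_n} | _].
have sub : F \subset F0 :|: (fun p : 'I_n * {set 'I_n} => p.1 |: p.2) @: setX Z F1.
  apply/subsetP => V; rewrite !inE => /andP[/eqP hV hb].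
  have : (#|V :&: Z| <= 1)%N by rewrite leqNgt.
  rewrite leq_eqVlt ltnS leqn0 cards_eq0 => /orP[/cards1P[z hz]| /eqP h0].
    apply/orP; right; apply/imsetP; exists (z, V :\ z) => /=.
      have zVZ : z \in V :&: Z by rewrite hz set11.
      move: (zVZ); rewrite inE => /andP[zV zZ].
      rewrite !inE zZ /=; apply/andP; split.
        apply/subsetP => x; rewrite !inE => /andP[xz xV]; apply/negP => xZ.
        have : x \in V :&: Z by rewrite inE xV xZ.
        by rewrite hz inE (negbTE xz).
      by rewrite -hV (cardsD1 z V) zV.
    have : z \in V :&: Z by rewrite hz set11.
    rewrite inE => /andP[zV _].
    by rewrite setD1K.
  apply/orP; left; rewrite hV eqxx andbT.
  apply/subsetP => x xV; rewrite inE; apply/negP => xZ.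
  have : x \in V :&: Z by rewrite inE xV xZ.
  by rewrite h0 inE.
apply: (leq_trans (subset_leq_card sub)).
apply: (leq_trans (leq_card_setU _ _)).
apply: leq_add; first by rewrite /F0 cards_draws.
apply: (leq_trans (leq_imset_card _ _)).
by rewrite cardsX /F1 cards_draws.
Qed.
Lemma bin_ratio r j : 'C(r, j.+2) * (j.+2 * j.+1) <= r * r * 'C(r, j).
Proof.
have h1 := mul_bin_left r j.+1.
have h2 := mul_bin_left r j.
have e : 'C(r, j.+2) * (j.+2 * j.+1) = (r - j.+1) * (r - j) * 'C(r, j).
  by rewrite mulnA [_ * j.+2]mulnC h1 -mulnA [_ * j.+1]mulnC h2 mulnA.
rewrite e; apply: leq_mul => //; apply: leq_mul; apply: leq_subr.
Qed.

Lemma vand_le m r k i : i <= k -> 'C(m, i) * 'C(r, k - i) <= 'C(m + r, k).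
Proof.
move=> ik; rewrite -binomial.Vandermonde.
rewrite (bigD1 (Ordinal (ik : i < k.+1))) //=; exact: leq_addr.
Qed.

Lemma bad_bound n m k : m <= n -> 3 <= k ->
  ('C(n - m, k) + m * 'C(n - m, k.-1)) * ((k - 2) * (k - 2) * ((m - 2) * (m - 3)))
    <= 8 * (n * n) * 'C(n, k).
Proof.
move=> mn; case: k => [|[|[|j]]] // _.
set r := n - m.
have nE : n = m + r by rewrite /r subnKC.
have r_le : r <= n by rewrite /r leq_subr.
have A1 := bin_ratio r j.+1.
have A2 := bin_ratio r j.
have V2 := @vand_le m r (j.+3) 2 isT.
have V3 := @vand_le m r (j.+3) 3 isT.
rewrite -nE in V2 V3.
have D2 : m * (m - 1) = 2 * 'C(m, 2).
  by rewrite -mul_bin_diag bin1 subn1.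
have D3 : forall m, m * (m - 1) * (m - 2) = 6 * 'C(m, 3).
  clear; case=> [|m]; first by rewrite bin0n.
  have e1 := mul_bin_diag m.+1 2.
  have e2 := mul_bin_diag m 1.
  rewrite bin1 /= in e1 e2.
  rewrite subn1 /= subSS subn1 -mulnA e2 mulnCA e1; lia.
have rr : r * r <= n * n by apply: leq_mul.
have e2 : j.+3 - 2 = j.+1 by rewrite !subSS subn0.
have e3 : j.+3 - 3 = j by rewrite !subSS subn0.
rewrite e3 in V3; rewrite e2 /=.
rewrite mulnDl.
have T1 : 'C(r, j.+3) * (j.+1 * j.+1 * ((m - 2) * (m - 3))) <= 2 * (n * n) * 'C(n, j.+3).
  apply: (@leq_trans ('C(r, j.+3) * (j.+3 * j.+2) * (m * (m - 1)))).
    rewrite -[X in _ <= X]mulnA; apply: leq_mul => //; apply: leq_mul.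
      apply: leq_mul; lia.
    apply: leq_mul; lia.
  apply: (@leq_trans (r * r * 'C(r, j.+1) * (2 * 'C(m, 2)))).
    by rewrite D2 leq_mul2r A1 orbT.
  have -> : r * r * 'C(r, j.+1) * (2 * 'C(m, 2)) = 2 * (r * r) * ('C(m, 2) * 'C(r, j.+1)) by ring.
  by apply: leq_mul => //; apply: leq_mul.
have T2 : m * 'C(r, j.+2) * (j.+1 * j.+1 * ((m - 2) * (m - 3))) <= 6 * (n * n) * 'C(n, j.+3).
  apply: (@leq_trans ('C(r, j.+2) * (j.+2 * j.+1) * (m * (m - 1) * (m - 2)))).
    have h1 : j.+1 * j.+1 <= j.+2 * j.+1 by rewrite leq_mul2r ltnW ?orbT.
    have h2 : (m - 2) * (m - 3) <= (m - 1) * (m - 2) by rewrite mulnC; apply: leq_mul; lia.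
    have -> : m * 'C(r, j.+2) * (j.+1 * j.+1 * ((m - 2) * (m - 3))) = 'C(r, j.+2) * (j.+1 * j.+1) * (m * ((m - 2) * (m - 3))) by ring.
    have -> : 'C(r, j.+2) * (j.+2 * j.+1) * (m * (m - 1) * (m - 2)) = 'C(r, j.+2) * (j.+2 * j.+1) * (m * ((m - 1) * (m - 2))) by ring.
    apply: leq_mul; first by apply: leq_mul.
    by apply: leq_mul.
  apply: (@leq_trans (r * r * 'C(r, j) * (6 * 'C(m, 3)))).
    by rewrite D3 leq_mul2r A2 orbT.
  have -> : r * r * 'C(r, j) * (6 * 'C(m, 3)) = 6 * (r * r) * ('C(m, 3) * 'C(r, j)) by ring.
  by apply: leq_mul => //; apply: leq_mul.
lia.
Qed.

Local Open Scope ring_scope.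
Definition Xz n (s : degseq n) : nat := #|[set i | s i == 0%N]|.

Lemma Xz_add_le n (s : degseq n) u v : (Xz (add_edge s u v) <= Xz s)%N.
Proof.
apply: subset_leq_card; apply/subsetP => i; rewrite !inE !ffunE.
by rewrite !addn_eq0 => /andP[/andP[-> _] _].
Qed.

Lemma Xz_add_00 n (s : degseq n) u v : s u = 0%N -> s v = 0%N -> u != v ->
  Xz (add_edge s u v) = (Xz s - 2)%N.
Proof.
move=> su sv uv; rewrite /Xz.
set Z := [set i | s i == 0%N].
have -> : [set i | add_edge s u v i == 0%N] = Z :\ u :\ v.
  apply/setP => i; rewrite !inE !ffunE !addn_eq0 !eqb0.
  by rewrite andbC [_ && (s i == 0%N)]andbC andbA.
rewrite (cardsD1 u Z) (cardsD1 v (Z :\ u)) !inE su sv eq_sym uv !eqxx /=.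
by rewrite add1n add1n subn2.
Qed.

Lemma avg_le n (S : {set 'I_n}) (F : 'I_n -> 'I_n -> rat) (B : rat) : 0 <= B ->
  (forall u v, u \in S -> v \in S -> v != u -> F u v <= B) ->
  (\sum_(u in S) \sum_(v in S | v != u) F u v) / (#|S| * (#|S| - 1))%:R <= B.
Proof.
move=> B0 hF.
have h1 : \sum_(u in S) \sum_(v in S | v != u) F u v <= \sum_(u in S) B *+ (#|S| - 1).
  apply: ler_sum => u uS.
  have -> : B *+ (#|S| - 1) = \sum_(v in S :\ u) B.
    by rewrite sumr_const (cardsD1 u S) uS add1n subn1.
  rewrite [X in _ <= X](eq_bigl (fun v => (v \in S) && (v != u))); last first.
    by move=> v; rewrite !inE andbC.
  by apply: ler_sum => v /andP[vS vu]; apply: hF.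
rewrite sumr_const in h1.
have [->|S0] := eqVneq (#|S| * (#|S| - 1))%N 0%N; first by rewrite invr0 mulr0.
rewrite ler_pdivrMr ?ltr0n ?lt0n //.
apply: (le_trans h1); rewrite -mulrnA mulr_natr mulnC; exact: lexx.
Qed.
Lemma invle (x y : rat) : 0 < x -> x <= y -> y^-1 <= x^-1.
Proof. move=> x0 xy; rewrite lef_pV2 ?posrE //; exact: lt_le_trans xy. Qed.

Definition Wf (a D : rat) (x : nat) : rat :=
  if x%:R <= a then 0 else D * ((a - 3)^-1 - (x%:R - 2)^-1).
Definition Gf (a D : rat) (t x : nat) : rat :=
  Num.max a (x%:R - 2 * t%:R) + 2 * Wf a D x.


Lemma Wf_ge0 a D x : 3 < a -> 0 <= D -> 0 <= Wf a D x.
Proof.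
move=> a3 D0; rewrite /Wf; case: ifP => // /negbT; rewrite -ltNge => ax.
apply: mulr_ge0 => //; rewrite subr_ge0; apply: invle; lra.
Qed.

Lemma Wf_mono a D x y : 3 < a -> 0 <= D -> (x <= y)%N -> Wf a D x <= Wf a D y.
Proof.
move=> a3 D0 xy; have xyR : x%:R <= y%:R :> rat by rewrite ler_nat.
rewrite {1}/Wf; case: ifP => [_|/negbT]; first exact: Wf_ge0.
rewrite -ltNge => ax; rewrite /Wf ifF; last by apply/negbTE; rewrite -ltNge; lra.
apply: ler_wpM2l => //; apply: lerB => //; apply: invle; lra.
Qed.

Lemma Wf_le a D x : 3 < a -> 0 <= D -> Wf a D x <= D / (a - 3).
Proof.
move=> a3 D0; rewrite /Wf; case: ifP => [_|/negbT]; first by apply: divr_ge0 => //; lra.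
rewrite -ltNge => ax; apply: ler_wpM2l => //.
rewrite lerBlDr lerDl invr_ge0; lra.
Qed.

Lemma Wf_delta a D m : 3 < a -> 0 <= D -> a < m%:R ->
  Wf a D (m - 2) + D * ((m%:R - 2) * (m%:R - 3))^-1 <= Wf a D m.
Proof.
move=> a3 D0 am.
have m2 : (2 <= m)%N by rewrite -(ler_nat rat); lra.
have e : ((m%:R - 2) * (m%:R - 3))^-1 = (m%:R - 3)^-1 - (m%:R - 2)^-1 :> rat.
  by field; apply/andP; split; apply/eqP; lra.
have hm : (m%:R <= a) = false by apply/negbTE; rewrite -ltNge.
rewrite e /Wf hm.
rewrite natrB //.
case: ifP => [_|/negbT]; rewrite ?add0r.
  apply: ler_wpM2l => //; apply: lerB => //; apply: invle; lra.
rewrite -ltNge => am2.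
rewrite -mulrDr; apply: ler_wpM2l => //.
have -> : (a - 3)^-1 - (m%:R - 2 - 2)^-1 + ((m%:R - 3)^-1 - (m%:R - 2)^-1) =
   (a - 3)^-1 - (m%:R - 2)^-1 + ((m%:R - 3)^-1 - (m%:R - 2 - 2)^-1) by ring.
rewrite gerDl subr_le0; apply: invle; lra.
Qed.

Lemma Gf_mono a D t x y : 3 < a -> 0 <= D -> (x <= y)%N -> Gf a D t x <= Gf a D t y.
Proof.
move=> a3 D0 xy; rewrite /Gf; apply: lerD.
  by apply: le_max2 => //; rewrite lerD2r ler_nat.
by rewrite ler_pM2l ?ltr0n //; apply: Wf_mono.
Qed.

Lemma Gf_ge0 a D t x : 3 < a -> 0 <= D -> 0 <= Gf a D t x.
Proof.
move=> a3 D0; rewrite /Gf; apply: addr_ge0.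
  by rewrite le_max; apply/orP; left; lra.
by apply: mulr_ge0 => //; apply: Wf_ge0.
Qed.

Lemma Gf_small a D t x : 3 < a -> x%:R <= a -> Gf a D t x = a.
Proof.
move=> a3 xa; rewrite /Gf /Wf xa mulr0 addr0 max_l //.
have : 0 <= t%:R :> rat by rewrite ler0n.
lra.
Qed.

Lemma Gf_base a D x : 3 < a -> 0 <= D -> x%:R <= Gf a D 0 x.
Proof.
move=> a3 D0; rewrite /Gf mulr0 subr0.
have := Wf_ge0 x a3 D0; have : x%:R <= Num.max a x%:R by rewrite le_max lexx orbT.
lra.
Qed.

Lemma Gf_step a D t m p : 3 < a -> 0 <= D -> a < m%:R -> 0 <= p -> p <= 1/2 ->
  2 * p <= D * ((m%:R - 2) * (m%:R - 3))^-1 ->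
  Gf a D t (m - 2) + p * (Gf a D t m - Gf a D t (m - 2)) <= Gf a D t.+1 m.
Proof.
move=> a3 D0 am p0 p1 hp.
have m2 : (2 <= m)%N by rewrite -(ler_nat rat); lra.
have hd := Wf_delta a3 D0 am.
set W2 := Wf a D (m - 2) in hd *; set Wm := Wf a D m in hd *.
set M := Num.max a (m%:R - 2 - 2 * t%:R).
have e1 : Gf a D t (m - 2) = M + 2 * W2 by rewrite /Gf natrB // /M.
have e2 : Gf a D t.+1 m = M + 2 * Wm.
  rewrite /Gf /M -[t.+1%:R](natr1 t); congr (Num.max _ _ + _); ring.
have e3 : Gf a D t m <= M + 2 + 2 * Wm.
  rewrite /Gf lerD2r /M.
  rewrite ge_max; apply/andP; split.
    by rewrite -addrA; apply: ler_wpDr => //; rewrite le_max lexx.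
  rewrite -lerBlDr; rewrite le_max; apply/orP; right; lra.
rewrite e1 e2.
have e4 : p * (Gf a D t m - (M + 2 * W2)) <= p * (2 + 2 * (Wm - W2)).
  by apply: ler_wpM2l => //; lra.
set dl := D * _ in hp hd.
have : 0 <= (1/2 - p) * (Wm - W2) by apply: mulr_ge0; lra.
nra.
Qed.

Lemma main_ind n k (a D : rat) : (k <= n)%N -> 3 < a -> 0 <= D ->
  (forall s : degseq n, a < (Xz s)%:R ->
     (#|[set V : {set 'I_n} | (#|V| == k) && ~~ (1 < #|V :&: [set i | s i == 0%N]|)%N]|)%:R
        / ('C(n, k))%:R <= (1/2 : rat) /\
     2 * ((#|[set V : {set 'I_n} | (#|V| == k) && ~~ (1 < #|V :&: [set i | s i == 0%N]|)%N]|)%:R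
        / ('C(n, k))%:R) <= D * (((Xz s)%:R - 2) * ((Xz s)%:R - 3))^-1) ->
  forall t (s : degseq n), drv_exp k t (@D0 n) s <= Gf a D t (Xz s).
Proof.
move=> kn a3 DD hbad; elim=> [|t IH] s.
  by apply: Gf_base.
rewrite [drv_exp _ _ _ _]/=.
set m := Xz s.
set Z := [set i | s i == 0%N].
set bad := [set V : {set 'I_n} | (#|V| == k) && ~~ (1 < #|V :&: Z|)%N].
set g2 := Gf a D t (m - 2); set g0 := Gf a D t m.
have g20 : g2 <= g0 by apply: Gf_mono => //; rewrite leq_subr.
have g2p : 0 <= g2 by apply: Gf_ge0.
have hV : forall V : {set 'I_n}, #|V| == k ->
   (let S := drv_choice_set s V in
    (\sum_(u in S) \sum_(v in S | v != u) drv_exp k t (@D0 n) (add_edge s u v))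
      / (#|S| * (#|S| - 1))%:R) <= g2 + (g0 - g2) * (V \in bad)%:R.
  move=> V hVk /=.
  have eV0 : [set i in V | s i == 0%N] = V :&: Z by apply/setP => i; rewrite !inE.
  rewrite /drv_choice_set eV0; case: ifP => hg.
    rewrite /bad inE hVk hg /= mulr0 addr0.
    apply: avg_le => // u v; rewrite !inE => /andP[_ /eqP su] /andP[_ /eqP sv] vu.
    apply: (le_trans (IH _)); rewrite Xz_add_00 // eq_sym //.
  rewrite /bad inE hVk hg /= mulr1 addrC subrK.
  apply: avg_le; first by apply: Gf_ge0.
  move=> u v _ _ _; apply: (le_trans (IH _)); apply: Gf_mono => //; exact: Xz_add_le.
set C := 'C(n, k).
have Cpos : (0 < C)%N by rewrite bin_gt0.
have hsum : \sum_(V : {set 'I_n} | #|V| == k)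
   (let S := drv_choice_set s V in
    (\sum_(u in S) \sum_(v in S | v != u) drv_exp k t (@D0 n) (add_edge s u v))
      / (#|S| * (#|S| - 1))%:R)
   <= g2 *+ C + (g0 - g2) * (#|bad|)%:R.
  apply: (le_trans (ler_sum _ hV)).
  rewrite big_split /= -mulr_sumr.
  apply: lerD.
    rewrite (eq_bigl (fun V => V \in [set V : {set 'I_n} | #|V| == k])); last first.
      by move=> V; rewrite inE.
    by rewrite sumr_const card_draws card_ord.
  rewrite ler_wpM2l ?subr_ge0 //.
  rewrite big_mkcond /= [X in _ <= X](_ : _ = \sum_(V in bad) (1 : rat)); last by rewrite sumr_const.
  rewrite [X in _ <= X]big_mkcond /=; apply: ler_sum => V _.
  case: ifP => hk; last by case: (V \in bad).
  by case: (V \in bad).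
pose p : rat := (#|bad|)%:R / C%:R.
have Cr : 0 < C%:R :> rat by rewrite ltr0n.
have hp : (\sum_(V : {set 'I_n} | #|V| == k)
   (let S := drv_choice_set s V in
    (\sum_(u in S) \sum_(v in S | v != u) drv_exp k t (@D0 n) (add_edge s u v))
      / (#|S| * (#|S| - 1))%:R)) / C%:R <= g2 + p * (g0 - g2).
  rewrite ler_pdivrMr // /p; apply: (le_trans hsum).
  rewrite le_eqVlt; apply/orP; left; apply/eqP; rewrite -mulr_natr.
  by field; rewrite lt0r_neq0.
apply: (le_trans hp).
have p0 : 0 <= p by apply: divr_ge0; rewrite ler0n.
case: (lerP (m%:R) a) => ma.
  have p1 : p <= 1.
    rewrite /p ler_pdivrMr // mul1r ler_nat /C.
    rewrite -[X in 'C(X, _)](card_ord n) -card_draws.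
    apply: subset_leq_card; apply/subsetP => V; rewrite !inE => /andP[-> _] //.
  rewrite Gf_small // /g0 Gf_small // in g20 *.
  nra.
have [hp1 hp2] := hbad s ma.
exact: Gf_step.
Qed.

Lemma Xz_empty n : Xz (empty_graph n) = n.
Proof.
rewrite /Xz (_ : [set i | empty_graph n i == 0%N] = setT) ?cardsT ?card_ord //.
by apply/setP => i; rewrite !inE ffunE.
Qed.

Lemma hbad_lemma n k (s : degseq n) (u : rat) : (3 <= k <= n)%N -> 0 < u ->
  4 * u + 3 < (Xz s)%:R ->
  let K := (k%:R - 2 : rat) in u * K = n%:R ->
     (#|[set V : {set 'I_n} | (#|V| == k) && ~~ (1 < #|V :&: [set i | s i == 0%N]|)%N]|)%:R
        / ('C(n, k))%:R <= (1/2 : rat) /\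
     2 * ((#|[set V : {set 'I_n} | (#|V| == k) && ~~ (1 < #|V :&: [set i | s i == 0%N]|)%N]|)%:R
        / ('C(n, k))%:R) <= 16 * (u * u) * (((Xz s)%:R - 2) * ((Xz s)%:R - 3))^-1.
Proof.
move=> /andP[k3 kn] u0 hm K hu.
set m := Xz s in hm *.
set Z := [set i | s i == 0%N].
set bad := [set V : {set 'I_n} | _].
have hA := @bad_count n k Z.
have cZ : #|Z| = m by [].
have mn : (m <= n)%N by rewrite -[n in (_ <= n)%N](card_ord n) max_card.
have cCZ : #|~: Z| = (n - m)%N.
  have := cardsC Z; rewrite card_ord cZ; lia.
rewrite cCZ cZ in hA.
have hB := @bad_bound n m k mn k3.
have m4 : (3 < m)%N by rewrite -(ltr_nat rat); lra.
have hN : (#|bad| * ((k - 2) * (k - 2) * ((m - 2) * (m - 3))) <= 8 * (n * n) * 'C(n, k))%N.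
  apply: leq_trans hB; by rewrite leq_mul2r hA orbT.
have ek : ((k - 2)%N%:R : rat) = k%:R - 2 by rewrite natrB //; apply: leq_trans k3.
have em2 : ((m - 2)%N%:R : rat) = m%:R - 2 by rewrite natrB //; apply: leq_trans m4.
have em3 : ((m - 3)%N%:R : rat) = m%:R - 3 by rewrite natrB //; apply: ltnW.
move: hN; rewrite -(ler_nat rat) !natrM ek em2 em3.
rewrite -/K.
set mr := (m%:R : rat).
set X := (mr - 2) * (mr - 3).
set Cr := ('C(n, k))%:R : rat.
have Cr0 : 0 < Cr by rewrite ltr0n bin_gt0.
have K0 : 0 < K.
  rewrite /K; have : (3 <= k%:R :> rat) by rewrite (ler_nat rat 3 k).
  lra.
pose p : rat := (#|bad|)%:R / Cr.
have eB : (#|bad|)%:R = p * Cr by rewrite /p mulrVK // unitfE lt0r_neq0.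
rewrite eB -hu => h.
have hpX : p * X <= 8 * (u * u).
  have e1 : p * Cr * (K * K * X) = (p * X) * (Cr * (K * K)) by ring.
  have e2 : 8 * (u * K * (u * K)) * Cr = (8 * (u * u)) * (Cr * (K * K)) by ring.
  rewrite e1 e2 in h.
  by rewrite -(ler_pM2r (_ : 0 < Cr * (K * K))) // !mulr_gt0.
have Xb : 16 * (u * u) < X.
  rewrite /X; have h1 : 4 * u < mr - 3 by lra.
  have h2 : (4 * u) * (4 * u) < (mr - 3) * (mr - 3).
    by apply: ltr_pM => //; apply: mulr_ge0 => //; apply: ltW.
  have h3 : (mr - 3) * (mr - 3) <= (mr - 2) * (mr - 3).
    by apply: ler_wpM2r; lra.
  have e : 16 * (u * u) = (4 * u) * (4 * u) by ring.
  rewrite e; exact: lt_le_trans h2 h3.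
have X0 : 0 < X.
  have uu : 0 <= u * u by apply: mulr_ge0; apply: ltW.
  lra.
have p0 : 0 <= p by rewrite /p divr_ge0 // ler0n.
rewrite mulrK; last by rewrite unitfE lt0r_neq0.
split.
  rewrite -(ler_pM2r X0); lra.
rewrite ler_pdivlMr; last exact: X0.
lra.
Qed.

Lemma half_le n : n%:R - 2 * (n %/ 2)%:R <= 1 :> rat.
Proof.
have h : (n <= 2 * (n %/ 2) + 1)%N by lia.
move: h; rewrite -(ler_nat rat) natrD natrM => h; lra.
Qed.

Lemma arith (u v kr nr w : rat) : 4 <= kr -> kr <= nr -> 0 < u ->
  u * (kr - 2) = nr -> v * kr = nr -> w <= 4 * u -> 4 * u + 3 + 2 * w <= 27 * v.
Proof.
move=> k4 kn u0 hu hv hw.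
have kr0 : 0 < kr by lra.
have uv : u <= 2 * v.
  have h4 : 0 <= u * (kr - 4) by apply: mulr_ge0; lra.
  rewrite -(ler_pM2r kr0); lra.
have v1 : 1 <= v by rewrite -(ler_pM2r kr0) mul1r hv.
lra.
Qed.

Lemma consts (nr kr : rat) : 4 <= kr -> kr <= nr ->
  let u := nr / (kr - 2) in (u * (kr - 2) = nr) /\ (0 < u) /\ (3 < 4 * u + 3) /\ (0 <= 16 * (u * u)) /\ (1 <= 4 * u + 3) /\ (16 * (u * u) / (4 * u + 3 - 3) = 4 * u).
Proof.
move=> k4 kn u.
have K0 : 0 < kr - 2 by lra.
have hu : u * (kr - 2) = nr by rewrite /u mulrVK // unitfE lt0r_neq0.
have u0 : 0 < u by rewrite /u divr_gt0 //; lra.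
split; first exact: hu.
split; first exact: u0.
split; first lra.
split; first by apply: mulr_ge0; [lra | apply: mulr_ge0; apply: ltW].
split; first lra.
field; apply/eqP; lra.
Qed.

Theorem proposition1 (k : nat -> nat)
  (hk : forall n : nat, (2 <= n)%N -> (2 <= k n <= n)%N)
  (hinf : forall M : nat, exists N : nat, forall n : nat, (N <= n)%N -> (M <= k n)%N) :
  exists (C : rat) (N : nat), 0 < C /\
    forall n : nat, (N <= n)%N ->
      ED0 n (k n) (n %/ 2) <= C * (n%:R / (k n)%:R).
Proof.
have [N0 hN] := hinf 4%N.
have C0 : (0 : rat) < 27 by lra.
exists 27, (maxn N0 2); split; first exact: C0.
move=> n hn.
have k4 : (4 <= k n)%N by apply: hN; move: hn; rewrite geq_max => /andP[].
have /andP[_ kn] : (2 <= k n <= n)%N by apply: hk; move: hn; rewrite geq_max => /andP[].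
set kk := k n in k4 kn *.
have kr4 : 4 <= kk%:R :> rat by rewrite (ler_nat rat 4 kk).
have knr : kk%:R <= n%:R :> rat by rewrite ler_nat.
have [hu [u0 [a3 [D0 [a1 eW]]]]] := consts kr4 knr.
move: (n%:R / (kk%:R - 2)) hu u0 a3 D0 a1 eW => u hu u0 a3 D0 a1 eW.
have hb := fun s hs => @hbad_lemma n kk s u (introT andP (conj (ltnW k4) kn)) u0 hs hu.
have main := @main_ind n kk (4 * u + 3) (16 * (u * u)) kn a3 D0 hb (n %/ 2) (empty_graph n).
clear hb.
rewrite /ED0; apply: (le_trans main); rewrite Xz_empty.
have hW := Wf_le n a3 D0.
rewrite eW in hW.
have hmax : Num.max (4 * u + 3) (n%:R - 2 * (n %/ 2)%:R) = 4 * u + 3.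
  by rewrite max_l; last exact: le_trans (half_le n) a1.
rewrite /Gf hmax.
apply: (arith kr4 knr u0 hu _ hW).
by rewrite mulrVK // unitfE lt0r_neq0 // ltr0n; apply: leq_trans k4.
Qed.
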